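(* Let $G$ be a group generated by a set $X$, let $p_1,\dots,p_k$ be palindromes in $G$ and $u\in G$. Then: (1) if $q=p_1p_2$, then for every integer $m$ the element $q^m$ is a product of two palindromes; (2) $l_{\mathcal P}([u,p_1p_2\cdots p_k])\le 2k+\varepsilon$, where $\varepsilon=0$ if $k$ is even and $\varepsilon=1$ if $k$ is odd.
   Context: A palindrome in $G=\langle X\rangle$ is an element represented by a reduced word in $X^{\pm1}$ reading the same forwards and backwards; $l_{\mathcal P}(g)$ is the minimal number of palindromes whose product is $g$. The commutator is $[g,h]=g^{-1}h^{-1}gh$. *)

(* Defs.v *)
From Stdlib Require Import ZArith List.
Import ListNotations.

Record Group := {
  carrier :> Type;
  gmul : carrier -> carrier -> carrier;
  gone : carrier;
  ginv : carrier -> carrier;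
  gmulA : forall x y z, gmul x (gmul y z) = gmul (gmul x y) z;
  gmul1l : forall x, gmul gone x = x;
  gmul1r : forall x, gmul x gone = x;
  gmulVl : forall x, gmul (ginv x) x = gone;
  gmulVr : forall x, gmul x (ginv x) = gone
}.

Arguments gmul {g} _ _.
Arguments gone {g}.
Arguments ginv {g} _.

Section Words.
Variable G : Group.

(* A letter of X^{+-1}: an element x of X with a sign (true = x, false = x^{-1}). *)
Definition letter := (G * bool)%type.

Definition letter_val (a : letter) : G :=
  if snd a then fst a else ginv (fst a).

Definition word_eval (w : list letter) : G :=
  fold_right (fun a acc => gmul (letter_val a) acc) gone w.

Definition word_over (X : G -> Prop) (w : list letter) : Prop :=
  Forall (fun a => X (fst a)) w.

Fixpoint reduced (w : list letter) : Prop :=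
  match w with
  | a :: ((b :: _) as t) => ~ (fst a = fst b /\ snd a <> snd b) /\ reduced t
  | _ => True
  end.

Definition generates (X : G -> Prop) : Prop :=
  forall g : G, exists w, word_over X w /\ word_eval w = g.

Definition palindrome (X : G -> Prop) (g : G) : Prop :=
  exists w, word_over X w /\ reduced w /\ rev w = w /\ word_eval w = g.

Definition gprod (l : list G) : G := fold_right gmul gone l.

Definition lP_le (X : G -> Prop) (g : G) (n : nat) : Prop :=
  exists ps : list G, length ps <= n /\ Forall (palindrome X) ps /\ gprod ps = g.

Fixpoint gpow_nat (g : G) (n : nat) : G :=
  match n with O => gone | S n' => gmul g (gpow_nat g n') end.

Definition gpowZ (g : G) (m : Z) : G :=
  match m with
  | Z0 => gone
  | Zpos p => gpow_nat g (Pos.to_nat p)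
  | Zneg p => ginv (gpow_nat g (Pos.to_nat p))
  end.

Definition commutator (g h : G) : G :=
  gmul (ginv g) (gmul (ginv h) (gmul g h)).

End Words.

Arguments word_eval {G} _.
Arguments word_over {G} _ _.
Arguments reduced {G} _.
Arguments generates {G} _.
Arguments palindrome {G} _ _.
Arguments gprod {G} _.
Arguments lP_le {G} _ _ _.
Arguments gpow_nat {G} _ _.
Arguments gpowZ {G} _ _.
Arguments commutator {G} _ _.

(* Main.v *)
Require Import Defs.
From Stdlib Require Import ZArith List Classical Lia.
Import ListNotations.

Section Aux.
Variable G : Group.

Lemma mul_inv_uniq (x y : G) : gmul x y = gone -> y = ginv x.
Proof.
  intro H. rewrite <- (gmul1l G y), <- (gmulVl G x), <- gmulA, H, gmul1r. reflexivity.
Qed.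

Lemma inv_inv (x : G) : ginv (ginv x) = x.
Proof. symmetry. apply mul_inv_uniq. apply gmulVl. Qed.

Lemma inv_mul (x y : G) : ginv (gmul x y) = gmul (ginv y) (ginv x).
Proof.
  symmetry. apply mul_inv_uniq.
  rewrite <- gmulA, (gmulA _ y), gmulVr, gmul1l, gmulVr. reflexivity.
Qed.

Lemma inv_one : ginv (@gone G) = gone.
Proof. symmetry. apply mul_inv_uniq. apply gmul1l. Qed.

Lemma eval_app (x y : list (letter G)) : word_eval (x ++ y) = gmul (word_eval x) (word_eval y).
Proof.
  induction x as [|a x IH]; simpl. now rewrite gmul1l.
  rewrite IH, gmulA. reflexivity.
Qed.

Lemma gprod_app (x y : list G) : gprod (x ++ y) = gmul (gprod x) (gprod y).
Proof.
  induction x as [|a x IH]; simpl. now rewrite gmul1l.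
  rewrite IH, gmulA. reflexivity.
Qed.

Definition flip (a : letter G) : letter G := (fst a, negb (snd a)).

Lemma val_flip a : letter_val G (flip a) = ginv (letter_val G a).
Proof.
  destruct a as [x []]; unfold flip, letter_val; simpl; auto. now rewrite inv_inv.
Qed.

Lemma eval_inv w : word_eval (rev (map flip w)) = ginv (word_eval w).
Proof.
  induction w as [|a w IH]; simpl. now rewrite inv_one.
  rewrite eval_app, IH. simpl. rewrite gmul1r, val_flip, inv_mul. reflexivity.
Qed.

Lemma eval_inv2 w : word_eval (map flip w) = ginv (word_eval (rev w)).
Proof.
  rewrite <- eval_inv, map_rev, rev_involutive. reflexivity.
Qed.

Variable X : G -> Prop.

Lemma over_app x y : word_over X x -> word_over X y -> word_over X (x ++ y).
Proof. intros; apply Forall_app; auto. Qed.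
Lemma over_rev x : word_over X x -> word_over X (rev x).
Proof. intros; apply Forall_rev; auto. Qed.
Lemma over_flip x : word_over X x -> word_over X (map flip x).
Proof. intros H. apply Forall_map. eapply Forall_impl; [|exact H]. simpl. auto. Qed.

Definition canc (a b : letter G) := fst a = fst b /\ snd a <> snd b.

Lemma canc_val a b : canc a b -> gmul (letter_val G a) (letter_val G b) = gone
   /\ gmul (letter_val G b) (letter_val G a) = gone.
Proof.
  destruct a as [x []], b as [y []]; unfold canc, letter_val; simpl; intros [E N];
  subst; try congruence; split; auto using gmulVl, gmulVr.
Qed.

Lemma reduce_ex w : word_over X w -> exists w', word_over X w' /\ reduced w' /\
  word_eval w' = word_eval w /\ word_eval (rev w') = word_eval (rev w).
Proof.
  induction w as [|a w IH]; intros Hw.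
  - exists []; simpl; auto.
  - inversion Hw; subst. destruct (IH H2) as [w' [O [R [E1 E2]]]].
    destruct w' as [|b t].
    + exists [a]. simpl in *. repeat split; auto.
      constructor; auto. rewrite <- E1; auto. rewrite eval_app, <- E2. simpl. rewrite gmul1l, gmul1r. reflexivity.
    + destruct (classic (canc a b)) as [C|C].
      * exists t. inversion O; subst. repeat split; auto.
        { simpl in R. destruct t; simpl in *; tauto. }
        { simpl. rewrite <- E1. simpl. rewrite gmulA, (proj1 (canc_val _ _ C)), gmul1l. auto. }
        { simpl. rewrite eval_app, <- E2. simpl. rewrite eval_app. simpl.
          rewrite !gmul1r, <- gmulA, (proj2 (canc_val _ _ C)), gmul1r. auto. }
      * exists (a :: b :: t). split; [|split; [|split]].
        { constructor; auto. }
        { simpl. split; auto. }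
        { simpl. rewrite <- E1. reflexivity. }
        { change (rev (a :: b :: t)) with (rev (b :: t) ++ [a]).
          simpl (rev (a :: w)). rewrite !eval_app, E2. reflexivity. }
Qed.

Lemma reduced_app (x : list (letter G)) a y : reduced (x ++ [a]) -> reduced (a :: y) -> reduced (x ++ a :: y).
Proof.
  induction x as [|b x IH]; intros H1 H2; [exact H2|].
  destruct x as [|c x].
  - destruct H1 as [N _]. split; auto.
  - destruct H1 as [N R]. split; [exact N|]. exact (IH R H2).
Qed.

Lemma reduced_tl (a : letter G) w : reduced (a :: w) -> reduced w.
Proof. destruct w; simpl; tauto. Qed.

Lemma reduced_prefix (x y : list (letter G)) : reduced (x ++ y) -> reduced x.
Proof.
  induction x as [|a x IH]; intros H; [exact I|].
  destruct x as [|b x]. exact I.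
  destruct H as [N R]. split; [exact N|]. exact (IH R).
Qed.

Lemma reduced_rev (w : list (letter G)) : reduced w -> reduced (rev w).
Proof.
  induction w as [|a w IH]; simpl; auto.
  destruct w as [|b t]; intros H; [exact I|].
  destruct H as [N R]. change (reduced ((rev t ++ [b]) ++ [a])). rewrite <- app_assoc. simpl.
  apply reduced_app. apply IH; auto. split; [|exact I].
  intros [E1 E2]; apply N; split; auto.
Qed.

Definition pw (g : G) := exists w, word_over X w /\ rev w = w /\ word_eval w = g.

Lemma pal_decomp n : forall w : list (letter G), length w = n -> rev w = w ->
  exists v, w = v ++ rev v \/ exists c, w = v ++ c :: rev v.
Proof.
  induction n as [n IH] using (well_founded_induction lt_wf).
  intros w Hl Hr. destruct w as [|a w1].
  - exists []; left; auto.
  - destruct w1 as [|a1 w2].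
    + exists []; right; exists a; auto.
    + destruct (@exists_last _ (a1 :: w2)) as [m [b E]]; [discriminate|].
      rewrite E in *. clear E. simpl in Hr. rewrite rev_app_distr in Hr. simpl in Hr.
      injection Hr as Eb Hr2. subst b. apply app_inj_tail in Hr2. destruct Hr2 as [Hm _].
      simpl in Hl. rewrite length_app in Hl. simpl in Hl.
      destruct (IH (length m) ltac:(lia) m eq_refl Hm) as [v [Ev|[c Ev]]].
      * exists (a :: v); left. rewrite Ev. simpl. rewrite <- !app_assoc. reflexivity.
      * exists (a :: v); right; exists c. rewrite Ev. simpl. rewrite <- !app_assoc. reflexivity.
Qed.


Lemma pal_rev_form (v : list (letter G)) c : rev (v ++ c :: rev v) = v ++ c :: rev v.
Proof. rewrite rev_app_distr. simpl. rewrite rev_involutive, <- app_assoc. reflexivity. Qed.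

Lemma pal_rev_form2 (v : list (letter G)) : rev (v ++ rev v) = v ++ rev v.
Proof. rewrite rev_app_distr, rev_involutive. reflexivity. Qed.

Lemma canc_sym a b : ~ canc a b -> ~ canc b a.
Proof. unfold canc. intros N [E1 E2]. apply N; split; auto. Qed.

Lemma odd_pal n : forall (v : list (letter G)) c, length v = n -> reduced v -> word_over X v ->
  X (fst c) -> palindrome X (word_eval (v ++ c :: rev v)).
Proof.
  induction n as [n IH] using (well_founded_induction lt_wf).
  intros v c Hl Hr Ho Hc. destruct v as [|a0 v0].
  - exists [c]. simpl. repeat split; auto. constructor; auto.
  - destruct (@exists_last _ (a0 :: v0)) as [v1 [d E]]; [discriminate|].
    rewrite E in *. clear E a0 v0.
    rewrite length_app in Hl. simpl in Hl.
    apply Forall_app in Ho. destruct Ho as [Ho1 Ho2]. inversion Ho2; subst.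
    destruct (classic (canc d c)) as [C|C].
    + assert (Eq : word_eval ((v1 ++ [d]) ++ c :: rev (v1 ++ [d])) = word_eval (v1 ++ d :: rev v1)).
      { rewrite rev_app_distr. simpl. rewrite <- app_assoc. simpl. rewrite !eval_app. simpl.
        rewrite (gmulA _ (letter_val G d)), (proj1 (canc_val _ _ C)), gmul1l. reflexivity. }
      rewrite Eq. apply (IH (length v1)); auto. lia. eapply reduced_prefix; eauto.
    + exists ((v1 ++ [d]) ++ c :: rev (v1 ++ [d])). split; [|split; [|split]]; auto.
      * apply over_app. apply over_app; auto. constructor; auto. apply over_rev. apply over_app; auto.
      * apply reduced_app. rewrite <- app_assoc. apply reduced_app; auto. split; [exact C| exact I].
        assert (RR : reduced (rev (v1 ++ [d]))) by (apply reduced_rev; auto).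
        rewrite rev_app_distr in *. change (reduced (c :: d :: rev v1)). split; [apply canc_sym; auto| exact RR].
      * apply pal_rev_form.
Qed.

Lemma even_pal (v : list (letter G)) : reduced v -> word_over X v ->
  palindrome X (word_eval (v ++ rev v)).
Proof.
  intros Hr Ho. destruct v as [|a0 v0].
  - exists []. simpl. repeat split; auto.
  - destruct (@exists_last _ (a0 :: v0)) as [v1 [d E]]; [discriminate|].
    rewrite E in *. clear E a0 v0.
    exists ((v1 ++ [d]) ++ rev (v1 ++ [d])). split; [|split; [|split]]; auto.
    + apply over_app; auto. apply over_rev; auto.
    + assert (RR : reduced (rev (v1 ++ [d]))) by (apply reduced_rev; auto).
      rewrite rev_app_distr in *. rewrite <- app_assoc. apply reduced_app; auto.
      change (reduced (d :: d :: rev v1)).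
      split; [unfold canc; intros [_ N]; apply N; auto | exact RR].
    + apply pal_rev_form2.
Qed.

Lemma pw_pal g : pw g -> palindrome X g.
Proof.
  intros [w [Ho [Hr Ev]]]. subst g.
  destruct (pal_decomp (length w) w eq_refl Hr) as [v [E|[c E]]]; subst w.
  - apply Forall_app in Ho. destruct Ho as [Ho _].
    destruct (reduce_ex v Ho) as [v' [O' [R' [E1 E2]]]].
    rewrite eval_app, <- E1, <- E2, <- eval_app. apply even_pal; auto.
  - apply Forall_app in Ho. destruct Ho as [Ho Hc]. inversion Hc; subst.
    destruct (reduce_ex v Ho) as [v' [O' [R' [E1 E2]]]].
    rewrite eval_app. simpl. rewrite <- E1, <- E2.
    change (gmul (letter_val G c) (word_eval (rev v'))) with (word_eval (c :: rev v')).
    rewrite <- eval_app. apply (odd_pal (length v')); auto.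
Qed.

Lemma pal_pw g : palindrome X g -> pw g.
Proof. intros [w [Ho [_ [Hr E]]]]. exists w; auto. Qed.

Lemma pw_one : pw gone.
Proof. exists []. simpl. split; [constructor|split; reflexivity]. Qed.

Lemma pw_sand w p : word_over X w -> pw p -> pw (gmul (word_eval (rev w)) (gmul p (word_eval w))).
Proof.
  intros Hw [wp [Ho [Hr E]]]. exists (rev w ++ wp ++ w). split; [|split].
  - apply over_app. apply over_rev; auto. apply over_app; auto.
  - rewrite !rev_app_distr, rev_involutive, Hr, app_assoc. reflexivity.
  - rewrite !eval_app, E. reflexivity.
Qed.

Lemma pw_inv p : pw p -> pw (ginv p).
Proof.
  intros [wp [Ho [Hr E]]]. exists (rev (map flip wp)). split; [|split].
  - apply over_rev, over_flip; auto.
  - rewrite rev_involutive, <- map_rev, Hr. reflexivity.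
  - rewrite eval_inv, E. reflexivity.
Qed.

Lemma pw_aba a b : pw a -> pw b -> pw (gmul a (gmul b a)).
Proof.
  intros [wa [Ho [Hr E]]] Hb. subst a.
  pose proof (pw_sand wa _ Ho Hb) as H. rewrite Hr in H. exact H.
Qed.

Lemma pow_S_r (x : G) k : gpow_nat (gmul x gone) 0 = gone /\ gpow_nat x (S k) = gmul (gpow_nat x k) x.
Proof.
  split; [reflexivity|]. induction k; simpl. rewrite gmul1l, gmul1r; auto.
  simpl in IHk. rewrite <- gmulA, <- IHk. reflexivity.
Qed.

Lemma shift (x y : G) k : gmul (gpow_nat (gmul x y) k) x = gmul x (gpow_nat (gmul y x) k).
Proof.
  induction k; simpl. rewrite gmul1l, gmul1r; auto.
  rewrite <- !gmulA, IHk. reflexivity.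
Qed.

Lemma pw_S k : forall a b, pw a -> pw b -> pw (gmul (gpow_nat (gmul a b) k) a).
Proof.
  induction k; intros a b Ha Hb.
  - simpl. rewrite gmul1l. auto.
  - assert (E : gmul (gpow_nat (gmul a b) (S k)) a = gmul a (gmul (gmul (gpow_nat (gmul b a) k) b) a)).
    { rewrite shift, <- (gmulA _ _ b a), <- (proj2 (pow_S_r (gmul b a) k)). reflexivity. }
    rewrite E. apply pw_aba; auto.
Qed.

Lemma gprod_inv (l : list G) : gprod (rev (map ginv l)) = ginv (gprod l).
Proof.
  induction l as [|a l IH]; simpl. now rewrite inv_one.
  rewrite gprod_app, IH. simpl. rewrite gmul1r, inv_mul. reflexivity.
Qed.

Lemma mulK (t z : G) : gmul t (gmul (ginv t) z) = z.
Proof. rewrite gmulA, gmulVr, gmul1l. reflexivity. Qed.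

Lemma conj_chain (ps : list G) : forall s t, Forall pw ps ->
  (forall p, pw p -> pw (gmul s (gmul p t)) /\ pw (gmul (ginv t) (gmul p (ginv s)))) ->
  exists qs, Forall pw qs /\ length qs = length ps /\ gprod qs = gmul s (gmul (gprod ps) (if Nat.odd (length ps) then t else ginv s)).
Proof.
  induction ps as [|p ps IH]; intros s t Hps H.
  - exists []. simpl. repeat split; auto. rewrite gmul1l, gmulVr. reflexivity.
  - inversion Hps; subst.
    destruct (IH (ginv t) (ginv s) H3) as [qs [Hq [Hl Eq]]].
    { intros p0 Hp0. rewrite !inv_inv. split; apply H; auto. }
    exists (gmul s (gmul p t) :: qs). split; [|split].
    + constructor; auto. apply H; auto.
    + simpl. auto.
    + simpl. rewrite Eq. rewrite Nat.odd_succ, <- Nat.negb_odd.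
      destruct (Nat.odd (length ps)); simpl; rewrite ?inv_inv;
      rewrite <- !gmulA, mulK; reflexivity.
Qed.

End Aux.

Theorem lemma2p5 (G : Group) (X : G -> Prop) (HX : generates X) :
  (forall (p1 p2 : G), palindrome X p1 -> palindrome X p2 ->
     forall m : Z, exists a b : G,
       palindrome X a /\ palindrome X b /\ gpowZ (gmul p1 p2) m = gmul a b)
  /\
  (forall (ps : list G) (u : G), Forall (palindrome X) ps ->
     lP_le X (commutator u (gprod ps))
       (2 * length ps + (if Nat.odd (length ps) then 1 else 0))).
Proof.
  split.
  - intros p1 p2 H1 H2 m. apply pal_pw in H1. apply pal_pw in H2.
    destruct m as [|p|p]; simpl.
    + exists gone, gone. split; [|split]; try apply pw_pal, pw_one. rewrite gmul1l; auto.
    + destruct (Pos2Nat.is_succ p) as [k Ek]. rewrite Ek.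
      exists (gmul (gpow_nat (gmul p1 p2) k) p1), p2. split; [|split].
      * apply pw_pal, pw_S; auto.
      * apply pw_pal; auto.
      * rewrite (proj2 (pow_S_r _ _ k)), gmulA. reflexivity.
    + destruct (Pos2Nat.is_succ p) as [k Ek]. rewrite Ek.
      exists (ginv p2), (ginv (gmul (gpow_nat (gmul p1 p2) k) p1)). split; [|split].
      * apply pw_pal, pw_inv; auto.
      * apply pw_pal, pw_inv, pw_S; auto.
      * rewrite (proj2 (pow_S_r _ _ k)), gmulA, inv_mul. reflexivity.
  - intros ps u Hps. destruct (HX u) as [w [Hw Eu]].
    set (t := word_eval (map (flip G) w)).
    assert (Ht : t = ginv (word_eval (rev w))) by apply eval_inv2.
    assert (H : forall p, pw G X p -> pw G X (gmul (ginv u) (gmul p t)) /\ pw G X (gmul (ginv t) (gmul p (ginv (ginv u))))).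
    { intros p Hp. split.
      - pose proof (pw_sand G X (map (flip G) w) p (over_flip G X w Hw) Hp) as K.
        rewrite eval_inv, Eu in K. exact K.
      - rewrite Ht, !inv_inv, <- Eu. apply pw_sand; auto. }
    assert (Hps' : Forall (pw G X) (rev (map ginv ps))).
    { apply Forall_rev, Forall_map. eapply Forall_impl; [|exact Hps].
      intros a Ha. apply pw_inv, pal_pw; auto. }
    destruct (conj_chain G X _ (ginv u) t Hps' H) as [qs [Hq [Hl Eq]]].
    rewrite length_rev, length_map, gprod_inv, inv_inv in *.
    assert (Hpw : Forall (pw G X) ps).
    { eapply Forall_impl; [|exact Hps]. apply pal_pw. }
    unfold commutator.
    destruct (Nat.odd (length ps)).
    + exists (qs ++ gmul (ginv t) (gmul gone u) :: ps). split; [|split].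
      * rewrite length_app. simpl. lia.
      * eapply Forall_impl; [apply pw_pal|]. apply Forall_app; split; auto. constructor; auto.
        pose proof (proj2 (H gone (pw_one G X))) as K. exact K.
      * rewrite gprod_app, Eq. simpl. rewrite gmul1l, <- !gmulA, mulK. reflexivity.
    + exists (qs ++ ps). split; [|split].
      * rewrite length_app. lia.
      * eapply Forall_impl; [apply pw_pal|]. apply Forall_app; split; auto.
      * rewrite gprod_app, Eq, <- !gmulA. reflexivity.
Qed.
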